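(* Let $(X,d)$ be an $R$-rough geodesic metric space for some $R\ge0$, and let $G$ be a group acting coboundedly on $X$ by isometries. Fix $x_0\in X$. For $t>0$ let $S_{x_0,t}=\{g\in G: d(x_0,gx_0)\le t\}$, let $d_{x_0,t}$ be the word metric on $G$ with respect to $S_{x_0,t}$ multiplied by $t$ (equivalently the graph metric on the graph with vertex set $G$ and an edge of length $t$ between $g$ and $gs$ for each $s\in S_{x_0,t}$), where $d_{x_0,t}(g,h)=\infty$ if $g,h$ lie in different components, and let $f_{x_0,t}\colon(G,d_{x_0,t})\to X$, $g\mapsto gx_0$. Let $K_{x_0,t}$ be the infimum of all $K\ge1$ for which there exists $C_K>0$ such that $f_{x_0,t}$ is a $(K,C_K)$-quasi-isometry (with $K_{x_0,t}=\infty$ if there is no such $K$). Then $K_{x_0,t}\to1$ as $t\to\infty$.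
   Context: $X$ is $R$-rough geodesic if any $x_1,x_2$ are joined by $f\colon[0,\ell]\to X$, $\ell=d(x_1,x_2)$, $f(0)=x_1,f(\ell)=x_2$, with $|d(f(s),f(t))-|s-t||\le R$. The action is cobounded if some (equivalently every) orbit is $D$-dense in $X$ for some $D$. A map $f$ is a $(K,C)$-quasi-isometry if $\frac1Kd(a,b)-C\le d(f(a),f(b))\le Kd(a,b)+C$ for all $a,b$ and every point of the target lies within $C$ of the image. *)

(* Defs.v *)
From Stdlib Require Import Reals.
From Coquelicot Require Import Coquelicot.
Open Scope R_scope.

Section Defs.
Variable X : Type.
Variable d : X -> X -> R.

Definition is_metric : Prop :=
  (forall x y, 0 <= d x y) /\ (forall x y, d x y = 0 <-> x = y) /\
  (forall x y, d x y = d y x) /\ (forall x y z, d x z <= d x y + d y z).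

Definition rough_geodesic (Rr : R) : Prop :=
  forall x1 x2, exists f : R -> X,
    f 0 = x1 /\ f (d x1 x2) = x2 /\
    forall s u, 0 <= s <= d x1 x2 -> 0 <= u <= d x1 x2 ->
      Rabs (d (f s) (f u) - Rabs (s - u)) <= Rr.

Variable G : Type.
Variable mul : G -> G -> G.
Variable inv : G -> G.
Variable one : G.

Definition is_group : Prop :=
  (forall a b c, mul a (mul b c) = mul (mul a b) c) /\
  (forall a, mul one a = a) /\ (forall a, mul a one = a) /\
  (forall a, mul (inv a) a = one) /\ (forall a, mul a (inv a) = one).

Variable act : G -> X -> X.

Definition isometric_action : Prop :=
  (forall x, act one x = x) /\
  (forall g h x, act (mul g h) x = act g (act h x)) /\
  (forall g x y, d (act g x) (act g y) = d x y).

Definition cobounded : Prop :=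
  exists z D, forall x, exists g, d x (act g z) <= D.

Definition Sball (x0 : X) (t : R) (g : G) : Prop := d x0 (act g x0) <= t.

Fixpoint reach (S : G -> Prop) (n : nat) (g h : G) : Prop :=
  match n with
  | O => g = h
  | Datatypes.S m => exists s, S s /\ reach S m (mul g s) h
  end.

(** n is the word-length distance between g and h w.r.t. S
    (least number of edges); no such n means distance = infinity. *)
Definition word_len (S : G -> Prop) (g h : G) (n : nat) : Prop :=
  reach S n g h /\ forall m, reach S m g h -> (n <= m)%nat.

(** With an infinite distance the lower
    bound (1/K) d - C <= d(f a, f b) fails, so every pair must be connected;
    the upper bound is then automatic. *)
Definition fQI (x0 : X) (t K C : R) : Prop :=
  (forall a b, (exists n, reach (Sball x0 t) n a b) /\
     forall n, word_len (Sball x0 t) a b n ->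
       / K * (t * INR n) - C <= d (act a x0) (act b x0) <= K * (t * INR n) + C) /\
  (forall y, exists g, d y (act g x0) <= C).

(** Set of admissible K >= 1; K_{x0,t} is its infimum (+oo if empty). *)
Definition Kset (x0 : X) (t : R) (K : R) : Prop :=
  1 <= K /\ exists C, 0 < C /\ fQI x0 t K C.

Definition Kconst (x0 : X) (t : R) : Rbar := Glb_Rbar (Kset x0 t).

End Defs.

(* Main.v *)
Require Import Defs.
From Stdlib Require Import Reals Lra Lia ZArith.
From Coquelicot Require Import Coquelicot.
Open Scope R_scope.

Lemma reach_snoc (G : Type) (mul : G -> G -> G) (S : G -> Prop) n :
  forall a g s, reach G mul S n a g -> S s -> reach G mul S (Datatypes.S n) a (mul g s).
Proof.
  induction n as [|n IH]; intros a g s H Hs.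
  - simpl in H. subst. exists s. split; auto. simpl. reflexivity.
  - destruct H as [s1 [Hs1 H]]. exists s1. split; [exact Hs1| apply IH; auto].
Qed.

Lemma reach_upper (X : Type) (d : X -> X -> R) (G : Type) (mul : G -> G -> G)
  (one : G) (act : G -> X -> X) (x0 : X) (t : R) :
  is_metric X d -> isometric_action X d G mul one act ->
  forall n a b, reach G mul (Sball X d G act x0 t) n a b ->
  d (act a x0) (act b x0) <= t * INR n.
Proof.
  intros [Hd0 [Hd1 [Hds Htr]]] [Ha1 [Ham Hai]].
  induction n as [|n IH]; intros a b H.
  - simpl in H. subst. simpl. rewrite Rmult_0_r. right. apply Hd1. reflexivity.
  - destruct H as [s [Hs H]]. specialize (IH _ _ H).
    unfold Sball in Hs.
    assert (E : d (act a x0) (act (mul a s) x0) = d x0 (act s x0)).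
    { rewrite Ham. apply Hai. }
    rewrite S_INR.
    pose proof (Htr (act a x0) (act (mul a s) x0) (act b x0)). lra.
Qed.

Lemma sball_inv (X : Type) (d : X -> X -> R) (G : Type) (mul : G -> G -> G)
  (inv : G -> G) (one : G) (act : G -> X -> X) (x0 : X) :
  is_group G mul inv one -> isometric_action X d G mul one act ->
  forall g h, d x0 (act (mul (inv g) h) x0) = d (act g x0) (act h x0)
    /\ mul g (mul (inv g) h) = h.
Proof.
  intros [Ga [G1l [G1r [Gil Gir]]]] [Ha1 [Ham Hai]] g h.
  assert (E : mul g (mul (inv g) h) = h).
  { rewrite Ga, Gir, G1l. reflexivity. }
  split; auto.
  rewrite <- (Hai g x0 (act (mul (inv g) h) x0)).
  rewrite <- Ham, E. reflexivity.
Qed.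

Lemma path_exists (X : Type) (d : X -> X -> R) (Rr : R)
  (G : Type) (mul : G -> G -> G) (inv : G -> G) (one : G)
  (act : G -> X -> X) (x0 : X) (D' t l : R) :
  is_metric X d -> rough_geodesic X d Rr -> is_group G mul inv one ->
  isometric_action X d G mul one act ->
  (forall y, exists g, d y (act g x0) <= D') -> 0 < l -> D' + (l + Rr) + D' <= t ->
  forall a b, exists m : nat, reach G mul (Sball X d G act x0 t) m a b /\
    INR m <= d (act a x0) (act b x0) / l + 1.
Proof.
  intros Hm Hrg Hg Ha Hdens Hl Ht a b.
  destruct Hm as [Hd0 [Hd1 [Hds Htr]]].
  assert (HD : 0 <= D').
  { destruct (Hdens x0) as [g Hg0]. pose proof (Hd0 x0 (act g x0)). lra. }
  set (L := d (act a x0) (act b x0)).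
  assert (HL : 0 <= L) by apply Hd0.
  destruct (Hrg (act a x0) (act b x0)) as [f [f0 [fL Hf]]].
  fold L in fL, Hf.
  set (r := L / l).
  assert (Hr : 0 <= r).
  { unfold r. apply Rmult_le_pos; auto. left. apply Rinv_0_lt_compat; auto. }
  destruct (archimed r) as [H1 H2].
  assert (Hup : (0 < up r)%Z). { apply lt_IZR. simpl. lra. }
  set (m := Z.to_nat (up r)).
  assert (Hm : INR m = IZR (up r)).
  { unfold m. rewrite INR_IZR_INZ. rewrite Z2Nat.id; auto. lia. }
  set (M := INR m).
  assert (HM : 0 < M) by (unfold M; lra).
  assert (HLM : L < l * M).
  { unfold M. rewrite Hm. unfold r in H1 |- *.
    apply (Rmult_lt_compat_l l) in H1; auto.
    replace (l * (L / l)) with L in H1 by (field; lra). exact H1. }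
  set (step := L / M).
  assert (Hst0 : 0 <= step).
  { unfold step. apply Rmult_le_pos; auto. left. apply Rinv_0_lt_compat; auto. }
  assert (Hstl : step <= l).
  { unfold step. apply Rmult_le_reg_r with M; auto.
    replace (L / M * M) with L by (field; lra). lra. }
  set (p := fun k : nat => f (INR k * step)).
  assert (Hrange : forall k, (k <= m)%nat -> 0 <= INR k * step <= L).
  { intros k Hk. apply le_INR in Hk. fold M in Hk. split.
    - apply Rmult_le_pos; auto. apply pos_INR.
    - apply Rle_trans with (M * step).
      + apply Rmult_le_compat_r; auto.
      + unfold step. right. field. lra. }
  assert (Hstep : forall k, (k < m)%nat -> d (p k) (p (Datatypes.S k)) <= l + Rr).
  { intros k Hk. unfold p.
    pose proof (Hf _ _ (Hrange k ltac:(lia)) (Hrange (Datatypes.S k) Hk)) as Hk'.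
    rewrite S_INR in Hk'.
    replace (INR k * step - (INR k + 1) * step) with (- step) in Hk' by ring.
    rewrite Rabs_Ropp, (Rabs_pos_eq step Hst0) in Hk'.
    pose proof (Rle_abs (d (f (INR k * step)) (f ((INR k + 1) * step)) - step)).
    rewrite S_INR. lra. }
  assert (Claim : forall k, (k < m)%nat -> exists g,
    reach G mul (Sball X d G act x0 t) k a g /\ d (act g x0) (p k) <= D').
  { induction k as [|k IH]; intros Hk.
    - exists a. split; [reflexivity|]. unfold p. simpl. rewrite Rmult_0_l, f0.
      rewrite (proj2 (Hd1 _ _) eq_refl). auto.
    - destruct (IH ltac:(lia)) as [g [Hrg' Hgd]].
      destruct (Hdens (p (Datatypes.S k))) as [h Hh].
      destruct (sball_inv X d G mul inv one act x0 Hg Ha g h) as [E1 E2].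
      exists h. split.
      + rewrite <- E2. apply reach_snoc; auto. unfold Sball. rewrite E1.
        pose proof (Hstep k ltac:(lia)).
        pose proof (Htr (act g x0) (p k) (act h x0)).
        pose proof (Htr (p k) (p (Datatypes.S k)) (act h x0)).
        lra.
      + rewrite Hds. auto. }
  destruct m as [|m'] eqn:Em.
  { unfold M in HM; simpl in HM; lra. }
  destruct (Claim m' ltac:(lia)) as [g [Hrg' Hgd]].
  destruct (sball_inv X d G mul inv one act x0 Hg Ha g b) as [E1 E2].
  exists (Datatypes.S m'). split.
  - rewrite <- E2. apply reach_snoc; auto. unfold Sball. rewrite E1.
    pose proof (Hstep m' ltac:(lia)).
    assert (Ep : p (Datatypes.S m') = act b x0).
    { unfold p. fold M. unfold step. replace (M * (L / M)) with L by (field; lra).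
      exact fL. }
    rewrite Ep in H.
    pose proof (Htr (act g x0) (p m') (act b x0)). lra.
  - fold M. unfold M. rewrite Hm. fold L. fold r. lra.
Qed.

Theorem lemma5p2
  (X : Type) (d : X -> X -> R) (Rr : R)
  (G : Type) (mul : G -> G -> G) (inv : G -> G) (one : G)
  (act : G -> X -> X) (x0 : X) :
  is_metric X d -> 0 <= Rr -> rough_geodesic X d Rr ->
  is_group G mul inv one -> isometric_action X d G mul one act ->
  cobounded X d G act ->
  forall eps, 0 < eps -> exists T, forall t, T < t ->
    Rbar_le (Finite 1) (Kconst X d G mul act x0 t) /\
    Rbar_lt (Kconst X d G mul act x0 t) (Finite (1 + eps)).
Proof.
  intros Hm HR Hrg Hg Ha [z [D Hz]] eps Heps.
  pose proof Hm as [Hd0 [Hd1 [Hds Htr]]].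
  pose proof Ha as [Ha1 [Ham Hai]].
  set (D' := D + d z x0).
  assert (Hdens : forall y, exists g, d y (act g x0) <= D').
  { intros y. destruct (Hz y) as [g Hgz]. exists g.
    pose proof (Htr y (act g z) (act g x0)). rewrite Hai in H. unfold D'. lra. }
  assert (HD : 0 <= D').
  { destruct (Hdens x0) as [g Hg0]. pose proof (Hd0 x0 (act g x0)). lra. }
  set (c := Rr + 2 * D').
  exists ((1 + eps) * (c + 1) / eps).
  intros t Ht.
  assert (Het : (1 + eps) * (c + 1) < eps * t).
  { apply (Rmult_lt_compat_l eps) in Ht; auto.
    replace (eps * ((1 + eps) * (c + 1) / eps)) with ((1 + eps) * (c + 1)) in Ht
      by (field; lra). exact Ht. }
  assert (Hc0 : 0 <= c) by (unfold c; lra).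
  assert (Htc : c + 1 < t).
  { destruct (Rlt_or_le (c + 1) t) as [h|h]; auto.
    assert (eps * t <= eps * (c + 1)) by (apply Rmult_le_compat_l; lra). nra. }
  set (l := t - c).
  assert (Hl : 0 < l) by (unfold l, c in *; lra).
  assert (Ht0 : 0 < t) by (unfold c in *; lra).
  set (K := t / l).
  assert (HK1 : 1 <= K).
  { unfold K. apply Rmult_le_reg_r with l; auto.
    replace (t / l * l) with t by (field; lra). unfold l, c in *. lra. }
  assert (HKe : K < 1 + eps).
  { unfold K. apply Rmult_lt_reg_r with l; auto.
    replace (t / l * l) with t by (field; lra). unfold l. nra. }
  assert (HKs : Kset X d G mul act x0 t K).
  { split; auto. exists (t + D' + 1). split; [lra|]. split.
    - intros a b.
      destruct (path_exists X d Rr G mul inv one act x0 D' t l Hm Hrg Hg Ha Hdens Hl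
        ltac:(unfold l, c; lra) a b) as [m [Hmr Hmb]].
      split; [exists m; exact Hmr|].
      intros n [Hn Hmin].
      specialize (Hmin m Hmr). apply le_INR in Hmin.
      pose proof (reach_upper X d G mul one act x0 t Hm Ha n a b Hn) as Hup.
      pose proof (pos_INR n).
      set (L := d (act a x0) (act b x0)) in *.
      split.
      + replace (/ K * (t * INR n)) with (l * INR n) by (unfold K; field; lra).
        assert (l * INR m <= L + l).
        { apply Rle_trans with (l * (L / l + 1)).
          - apply Rmult_le_compat_l; lra.
          - right. field. lra. }
        assert (l * INR n <= l * INR m) by (apply Rmult_le_compat_l; lra).
        unfold l, c in *. lra.
      + assert (t * INR n <= K * (t * INR n)).
        { rewrite <- (Rmult_1_l (t * INR n)) at 1.
          apply Rmult_le_compat_r; auto. apply Rmult_le_pos; lra. }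
        lra.
    - intros y. destruct (Hdens y) as [g Hgy]. exists g. lra. }
  destruct (Glb_Rbar_correct (Kset X d G mul act x0 t)) as [Hlb Hglb].
  split.
  - apply Hglb. intros x [Hx _]. simpl. exact Hx.
  - apply Rbar_le_lt_trans with (Finite K).
    + apply Hlb. exact HKs.
    + simpl. exact HKe.
Qed.
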